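(* Let $\Delta$ be a compact convex polygon in a $2$-dimensional real affine space with direction space $V$, and associate to each edge its normal line, a point of $\mathbb P(V^* )\cong\mathbb{RP}^1$. Then $\Delta$ is of rational type if and only if either $\Delta$ has at most $3$ distinct normal lines, or it has at least $4$ distinct normal lines and the cross-ratio of any four distinct ones is rational. In particular a quadrilateral is of rational type iff it has at most three distinct normal lines or the cross-ratio of its four normal lines is rational.
   Context: $\Delta$ is of rational type if there exists a lattice $\Lambda\subset V^*$ such that every edge has a normal vector lying in $\Lambda$. The cross-ratio of four distinct points $P_i=[x_i:y_i]\in\mathbb{RP}^1$ is $\mathbf r(P_1,P_2;P_3,P_4)=\frac{(x_1y_3-y_1x_3)(x_2y_4-y_2x_4)}{(x_1y_4-y_1x_4)(x_2y_3-y_2x_3)}$; whether it is rational does not depend on the ordering. *)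

(* Defs.v *)
(* The affine plane is modelled as R^2 = R * R over an
   arbitrary real field R (every 2-dim real affine space is affinely
   isomorphic to R^2, and the statement is invariant under such isos). *)
From HB Require Import structures.
From mathcomp Require Import all_boot all_order all_algebra.
Set Implicit Arguments. Unset Strict Implicit. Unset Printing Implicit Defensive.
Import Order.TTheory GRing.Theory Num.Theory.
Local Open Scope ring_scope.

Section Defs.
Variable R : realFieldType.

Definition det2 (a b : R * R) : R := a.1 * b.2 - a.2 * b.1.

(* pairing of a covector xi in dual V = R^2 with a vector x in V = R^2 *)
Definition pairing (xi x : R * R) : R := xi.1 * x.1 + xi.2 * x.2.

(* A compact convex polygon Delta is given by its n >= 3 vertices
   v 0, ..., v (n-1), listed counterclockwise and in strictly convex
   position: every other vertex lies strictly to the left of the oriented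
   line through v i and its cyclic successor v (ordS i).  Delta is the convex
   hull of the v i and its edges are the segments [v i, v (ordS i)]. *)
Definition convex_polygon (n : nat) (v : 'I_n -> R * R) : Prop :=
  (3 <= n)%N /\
  forall i j : 'I_n, j != i -> j != ordS i ->
    0 < det2 ((v (ordS i)).1 - (v i).1, (v (ordS i)).2 - (v i).2)
             ((v j).1 - (v i).1, (v j).2 - (v i).2).

Definition edge_dir (n : nat) (v : 'I_n -> R * R) (i : 'I_n) : R * R :=
  ((v (ordS i)).1 - (v i).1, (v (ordS i)).2 - (v i).2).

(* homogeneous coordinates (x, y) of the point of P(dual V) = RP^1 given by
   the normal line of the i-th edge: the covectors annihilating edge_dir v i *)
Definition normal_line (n : nat) (v : 'I_n -> R * R) (i : 'I_n) : R * R :=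
  (- (edge_dir v i).2, (edge_dir v i).1).

Definition proj_distinct (P Q : R * R) : Prop := det2 P Q != 0.

Definition distinct4 (P1 P2 P3 P4 : R * R) : Prop :=
  proj_distinct P1 P2 /\ proj_distinct P1 P3 /\ proj_distinct P1 P4 /\
  proj_distinct P2 P3 /\ proj_distinct P2 P4 /\ proj_distinct P3 P4.

Definition cross_ratio (P1 P2 P3 P4 : R * R) : R :=
  (det2 P1 P3 * det2 P2 P4) / (det2 P1 P4 * det2 P2 P3).

Definition is_rational (x : R) : Prop := exists q : rat, x = ratr q.

Definition in_lattice (a b xi : R * R) : Prop :=
  exists m k : int, xi = (m%:~R * a.1 + k%:~R * b.1, m%:~R * a.2 + k%:~R * b.2).

Definition rational_type (n : nat) (v : 'I_n -> R * R) : Prop :=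
  exists a b : R * R, det2 a b != 0 /\
    forall i : 'I_n, exists xi : R * R,
      xi != (0, 0) /\ in_lattice a b xi /\ pairing xi (edge_dir v i) = 0.

End Defs.

(* Main.v *)
From Stdlib Require Import Ring Classical.
Require Import Defs.
From HB Require Import structures.
From mathcomp Require Import all_boot all_order all_algebra.
Import Order.TTheory GRing.Theory Num.Theory.
Local Open Scope ring_scope.

Section Aux.
Variable R : realFieldType.
Lemma radd_ex : {f : R -> R -> R | forall x y, f x y = x + y}. Proof. by exists (fun x y => x + y). Qed.
Lemma rmul_ex : {f : R -> R -> R | forall x y, f x y = x * y}. Proof. by exists (fun x y => x * y). Qed.
Lemma ropp_ex : {f : R -> R | forall x, f x = - x}. Proof. by exists (fun x => - x). Qed.
Definition radd := proj1_sig radd_ex.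
Definition rmul := proj1_sig rmul_ex.
Definition ropp := proj1_sig ropp_ex.
Definition rsub x y := radd x (ropp y).
Lemma raddE (x y : R) : x + y = radd x y. Proof. by rewrite /radd (proj2_sig radd_ex). Qed.
Lemma rmulE (x y : R) : x * y = rmul x y. Proof. by rewrite /rmul (proj2_sig rmul_ex). Qed.
Lemma roppE (x : R) : - x = ropp x. Proof. by rewrite /ropp (proj2_sig ropp_ex). Qed.
Definition rzero : R := 0.
Definition rone : R := 1.
Lemma RthR : @ring_theory R rzero rone radd rmul rsub ropp eq.
Proof. rewrite /rsub /rzero /rone.
split; intros; rewrite -?raddE -?rmulE -?roppE ?add0r ?mul1r ?mulrDl ?subrr //; try (by rewrite addrC)||(by rewrite mulrC)||(by rewrite addrA)||(by rewrite mulrA). Qed.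
Add Ring RR : RthR.
Ltac rring := rewrite ?raddE ?rmulE ?roppE; match goal with |- ?x = ?y => change (@eq R x y) end; ring.

Definition scale (c : R) (P : R * R) := (c * P.1, c * P.2).

Lemma det2_scalel c (P Q : R * R) : det2 (scale c P) Q = c * det2 P Q.
Proof. rewrite /det2 /scale /=; rring. Qed.
Lemma det2_scaler c (P Q : R * R) : det2 P (scale c Q) = c * det2 P Q.
Proof. rewrite /det2 /scale /=; rring. Qed.
Lemma det2_anti (P Q : R * R) : det2 Q P = - det2 P Q.
Proof. rewrite /det2; rring. Qed.
Lemma det2_self (P : R * R) : det2 P P = 0.
Proof. by rewrite /det2 mulrC subrr. Qed.

Lemma pairing_det n (v : 'I_n -> R * R) (xi : R * R) i :
  pairing xi (edge_dir v i) = det2 xi (normal_line v i).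
Proof. rewrite /pairing /det2 /normal_line /=; rring. Qed.

Lemma cancelK (K x y : R) : K != 0 -> (K * x) / (K * y) = x / y.
Proof. by move=> hK; rewrite invfM mulrACA divff // mul1r. Qed.

Lemma prop_of (P Q : R * R) : P != (0, 0) -> det2 P Q = 0 ->
  exists c, Q = scale c P.
Proof.
case: P => p1 p2; case: Q => q1 q2 hP hd.
rewrite /det2 /= in hd.
have hs : p1 * p1 + p2 * p2 != 0.
  apply/negP => /eqP h; move/negP: hP; apply.
  have h1 : 0 <= p1 * p1 by rewrite -expr2 sqr_ge0.
  have h2 : 0 <= p2 * p2 by rewrite -expr2 sqr_ge0.
  move/eqP: h; rewrite paddr_eq0 // !mulf_eq0 !orbb => /andP[/eqP -> /eqP ->] //.
exists ((p1 * q1 + p2 * q2) / (p1 * p1 + p2 * p2)); rewrite /scale /=.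
congr (_, _).
  apply: (mulIf hs); rewrite mulrAC divfK //.
  have -> : q1 * (p1 * p1 + p2 * p2) = (p1 * q1 + p2 * q2) * p1 - p2 * (p1 * q2 - p2 * q1) by rring.
  by rewrite hd mulr0 subr0.
apply: (mulIf hs); rewrite mulrAC divfK //.
have -> : q2 * (p1 * p1 + p2 * p2) = (p1 * q1 + p2 * q2) * p2 + p1 * (p1 * q2 - p2 * q1) by rring.
by rewrite hd mulr0 addr0.
Qed.

Definition lat (a b : R * R) (m k : int) : R * R :=
  (m%:~R * a.1 + k%:~R * b.1, m%:~R * a.2 + k%:~R * b.2).

Lemma lattice_det (a b : R * R) m1 k1 m2 k2 :
  det2 (lat a b m1 k1) (lat a b m2 k2) = (m1 * k2 - k1 * m2)%:~R * det2 a b.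
Proof. rewrite intrB !intrM /lat /det2 /=; rring. Qed.

Lemma cr_scale c1 c2 c3 c4 (P1 P2 P3 P4 : R * R) :
  c1 != 0 -> c2 != 0 -> c3 != 0 -> c4 != 0 ->
  cross_ratio (scale c1 P1) (scale c2 P2) (scale c3 P3) (scale c4 P4)
  = cross_ratio P1 P2 P3 P4.
Proof.
move=> h1 h2 h3 h4; rewrite /cross_ratio !det2_scalel !det2_scaler.
set K := c1 * c2 * c3 * c4.
have hK : K != 0 by rewrite /K !mulf_neq0.
have -> : c1 * (c3 * det2 P1 P3) * (c2 * (c4 * det2 P2 P4)) = K * (det2 P1 P3 * det2 P2 P4) by rewrite /K; rring.
have -> : c1 * (c4 * det2 P1 P4) * (c2 * (c3 * det2 P2 P3)) = K * (det2 P1 P4 * det2 P2 P3) by rewrite /K; rring.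
by rewrite cancelK.
Qed.

Lemma cr_lat (a b : R * R) m1 k1 m2 k2 m3 k3 m4 k4 : det2 a b != 0 ->
  is_rational (cross_ratio (lat a b m1 k1) (lat a b m2 k2) (lat a b m3 k3) (lat a b m4 k4)).
Proof.
move=> hD; rewrite /cross_ratio !lattice_det.
set z13 := (m1 * k3 - k1 * m3); set z24 := (m2 * k4 - k2 * m4).
set z14 := (m1 * k4 - k1 * m4); set z23 := (m2 * k3 - k2 * m3).
have hK : det2 a b * det2 a b != 0 by rewrite mulf_neq0.
have -> : z13%:~R * det2 a b * (z24%:~R * det2 a b) = (det2 a b * det2 a b) * (z13%:~R * z24%:~R) by rring.
have -> : z14%:~R * det2 a b * (z23%:~R * det2 a b) = (det2 a b * det2 a b) * (z14%:~R * z23%:~R) by rring.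
rewrite cancelK //.
exists ((z13 * z24)%:~R / (z14 * z23)%:~R).
by rewrite fmorph_div /= !ratr_int !intrM.
Qed.

Lemma scale0_det c (P Q : R * R) : det2 (scale c P) Q != 0 -> c != 0.
Proof. by rewrite det2_scalel; apply: contraNneq => ->; rewrite mul0r. Qed.

Lemma core_fwd n (v : 'I_n -> R * R) : rational_type v ->
  forall i j k l, distinct4 (normal_line v i) (normal_line v j)
                      (normal_line v k) (normal_line v l) ->
  is_rational (cross_ratio (normal_line v i) (normal_line v j)
                                     (normal_line v k) (normal_line v l)).
Proof.
case=> a [b [hD hx]] i j k l.
have key : forall t, exists c m k, normal_line v t = scale c (lat a b m k).
  move=> t; have [xi [hxi [[m [k' hxe]] hp]]] := hx t.
  rewrite pairing_det in hp.
  have [c ->] := prop_of _ _ hxi hp.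
  rewrite hxe.
  by exists c, m, k'.
have [c1 [m1 [k1 ->]]] := key i.
have [c2 [m2 [k2 ->]]] := key j.
have [c3 [m3 [k3 ->]]] := key k.
have [c4 [m4 [k4 ->]]] := key l.
case=> [h12 [h13 [h14 [h23 [h24 h34]]]]].
rewrite /proj_distinct in h12 h13 h14 h23 h24 h34.
rewrite cr_scale; first exact: cr_lat.
- exact: scale0_det h12.
- exact: scale0_det h23.
- exact: scale0_det h34.
- by rewrite det2_anti oppr_eq0 in h34; apply: scale0_det h34.
Qed.

Lemma nzl (X Y : R * R) : det2 X Y != 0 -> X != (0, 0).
Proof. by apply: contraNneq => ->; rewrite /det2 /= !mul0r subrr. Qed.
Lemma nzr (X Y : R * R) : det2 X Y != 0 -> Y != (0, 0).
Proof. by apply: contraNneq => ->; rewrite /det2 /= !mulr0 subrr. Qed.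
Lemma lat10 (a b : R * R) : lat a b 1 0 = a.
Proof. by case: a => x y; rewrite /lat /= mulr0z mulr1z !mul1r !mul0r !addr0. Qed.
Lemma lat01 (a b : R * R) : lat a b 0 1 = b.
Proof. by case: b => x y; rewrite /lat /= mulr0z mulr1z !mul1r !mul0r !add0r. Qed.
Lemma lat11 (a b : R * R) : lat a b 1 1 = (a.1 + b.1, a.2 + b.2).
Proof. by rewrite /lat /= mulr1z !mul1r. Qed.
Lemma in_lat (a b : R * R) m k : in_lattice a b (lat a b m k).
Proof. by exists m, k. Qed.

Lemma core_bwd n (v : 'I_n -> R * R) i0 i1 :
  det2 (normal_line v i0) (normal_line v i1) != 0 ->
  (forall k m, distinct4 (normal_line v i0) (normal_line v i1)
                         (normal_line v k) (normal_line v m) ->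
     is_rational (cross_ratio (normal_line v i0) (normal_line v i1)
                              (normal_line v k) (normal_line v m))) ->
  rational_type v.
Proof.
move=> hD H.
set A := normal_line v i0 in hD H *; set B := normal_line v i1 in hD H *.
have [[k [hAk hBk]] | hno] := classic (exists k, (det2 A (normal_line v k) != 0) /\ (det2 B (normal_line v k) != 0)); last first.
  exists A, B; split => // i.
  case E1: (det2 A (normal_line v i) == 0).
    exists (lat A B 1 0); rewrite lat10; split; first exact: nzl hD.
    split; first by rewrite -{2}(lat10 A B); exact: in_lat.
    by rewrite pairing_det; apply/eqP.
  case E2: (det2 B (normal_line v i) == 0).
    exists (lat A B 0 1); rewrite lat01; split; first exact: nzr hD.
    split; first by rewrite -{2}(lat01 A B); exact: in_lat.
    by rewrite pairing_det; apply/eqP.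
  by exfalso; apply: hno; exists i; rewrite E1 E2.
set Nk := normal_line v k in hAk hBk H *.
set alpha := det2 Nk B; set beta := det2 A Nk.
have hal : alpha != 0 by rewrite /alpha det2_anti oppr_eq0.
set a := scale alpha A; set b := scale beta B.
have hab : det2 a b != 0 by rewrite /a /b det2_scalel det2_scaler !mulf_neq0.
exists a, b; split => // i.
set C := normal_line v i.
case E1: (det2 A C == 0).
  exists (lat a b 1 0); rewrite lat10; split; first exact: nzl hab.
  split; first by rewrite -{2}(lat10 a b); exact: in_lat.
  by rewrite pairing_det /a det2_scalel (eqP E1) mulr0.
case E2: (det2 B C == 0).
  exists (lat a b 0 1); rewrite lat01; split; first exact: nzr hab.
  split; first by rewrite -{2}(lat01 a b); exact: in_lat.
  by rewrite pairing_det /b det2_scalel (eqP E2) mulr0.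
case E3: (det2 Nk C == 0).
  exists (lat a b 1 1); split.
    apply: (@nzr a); rewrite -{1}(lat10 a b) lattice_det.
    by rewrite mul1r mul0r subr0 mulr1z mul1r.
  split; first exact: in_lat.
  rewrite pairing_det.
  have -> : det2 (lat a b 1 1) C = det2 A B * det2 Nk C.
    rewrite lat11 /a /b /alpha /beta /scale /det2 /=; rring.
  by rewrite (eqP E3) mulr0.
have hd4 : distinct4 A B Nk C.
  by rewrite /distinct4 /proj_distinct E1 E2 E3.
have [q hq] := H k i hd4.
exists (lat a b (numq q) (denq q)); split.
  apply: (@nzr a); rewrite -{1}(lat10 a b) lattice_det mul1r mul0r subr0.
  by rewrite mulf_neq0 // intr_eq0 denq_neq0.
split; first exact: in_lat.
rewrite pairing_det.
have hq' : det2 A Nk * det2 B C * (denq q)%:~R = (numq q)%:~R * (det2 A C * det2 B Nk).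
  move: hq; rewrite /cross_ratio /ratr => /eqP.
  rewrite eqr_div ?mulf_neq0 ?intr_eq0 ?denq_neq0 ?E1 //; first by move/eqP.
have -> : det2 (lat a b (numq q) (denq q)) C =
   det2 A Nk * det2 B C * (denq q)%:~R - (numq q)%:~R * (det2 A C * det2 B Nk).
  rewrite /lat /a /b /scale /alpha /beta /det2 /=; rring.
by rewrite hq' subrr.
Qed.

Lemma consec n (v : 'I_n -> R * R) : convex_polygon v -> forall i,
  ordS (ordS i) != i -> ordS (ordS i) != ordS i ->
  det2 (normal_line v i) (normal_line v (ordS i)) != 0.
Proof.
case=> _ hc i h1 h2; have := hc i _ h1 h2.
rewrite /normal_line /edge_dir /det2 /=.
match goal with |- is_true (_ < ?X) -> is_true (~~ (?Y == _)) => have E : Y = X by rring end.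
by rewrite E => hp; rewrite gt_eqF.
Qed.
End Aux.

Lemma I4 (k : 'I_4) : k = 0 \/ k = 1 \/ k = 2 \/ k = 3.
Proof.
case: k => [[|[|[|[|k]]]] Hk] //.
- by left; apply/val_inj.
- by right; left; apply/val_inj.
- by right; right; left; apply/val_inj.
- by right; right; right; apply/val_inj.
Qed.

Theorem mainTheorem13 :
  (forall (R : realFieldType) (n : nat) (v : 'I_n -> R * R),
    convex_polygon v ->
    (rational_type v <->
      (~ (exists i j k l : 'I_n,
            distinct4 (normal_line v i) (normal_line v j)
                      (normal_line v k) (normal_line v l)))
      \/
      ((exists i j k l : 'I_n,
            distinct4 (normal_line v i) (normal_line v j)
                      (normal_line v k) (normal_line v l)) /\
       (forall i j k l : 'I_n,
            distinct4 (normal_line v i) (normal_line v j)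
                      (normal_line v k) (normal_line v l) ->
            is_rational (cross_ratio (normal_line v i) (normal_line v j)
                                     (normal_line v k) (normal_line v l))))))
  /\
  (forall (R : realFieldType) (v : 'I_4 -> R * R),
    convex_polygon v ->
    (rational_type v <->
      (~ distinct4 (normal_line v 0) (normal_line v 1)
                   (normal_line v 2) (normal_line v 3))
      \/
      (distinct4 (normal_line v 0) (normal_line v 1)
                 (normal_line v 2) (normal_line v 3) /\
       is_rational (cross_ratio (normal_line v 0) (normal_line v 1)
                                (normal_line v 2) (normal_line v 3))))).
Proof.
split.
- move=> R n v hc; case: n v hc => [|[|[|n]]] v hc; try by case: hc.
  split.
  + move=> hrt.
    have [ex|nex] := classic (exists i j k l : 'I_n.+3,
            distinct4 (normal_line v i) (normal_line v j)
                      (normal_line v k) (normal_line v l)).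
      by right; split => // i j k l; apply: core_fwd.
    by left.
  + move=> hor; apply: (@core_bwd R _ v ord0 (ordS ord0)).
      apply: consec => //; apply/eqP => /(congr1 val) /=; rewrite !modn_small //.
    move=> k m hd; case: hor => [hne|[_ hall]]; last exact: hall.
    by exfalso; apply: hne; exists ord0, (ordS ord0), k, m.
- move=> R v hc; split.
  + move=> hrt.
    have [ex|nex] := classic (distinct4 (normal_line v 0) (normal_line v 1)
                 (normal_line v 2) (normal_line v 3)).
      by right; split => //; apply: core_fwd.
    by left.
  + move=> hor; apply: (@core_bwd R _ v 0 1).
      have -> : (1 : 'I_4) = ordS 0 by apply/val_inj.
      by apply: consec.
    move=> k m hd.
    have hd' := hd; case: hd' => h01 [h0k [h0m [h1k [h1m hkm]]]].
    rewrite /proj_distinct in h0k h0m h1k h1m hkm.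
    have [Ek|[Ek|[Ek|Ek]]] := I4 k; subst k;
    have [Em|[Em|[Em|Em]]] := I4 m; subst m;
    try by (rewrite ?det2_self ?eqxx in h0k h1k hkm h0m h1m).
    * by case: hor => [hne|[_ hr]] //; exfalso; apply: hne.
    * case: hor => [hne|[hd4 [q hq]]].
        exfalso; apply: hne.
        case: hd => [a1 [a2 [a3 [a4 [a5 a6]]]]].
        split => //; split => //; split => //; split => //; split => //.
        by rewrite /proj_distinct det2_anti oppr_eq0.
      exists q^-1.
      by rewrite fmorphV /= -hq /cross_ratio invf_div.
Qed.
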